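(* Let $r\in\mathbb{N}$ and $w,v\in\mathbb{YF}^r$. Write $\underline{x}=s(x)$ and $h=h(w,v)$. 1) If $\mathbb{1}_{w,v}=1$, then $$d_r(w,v)=\sum_{l=0}^{h}\big(d_1(\underline{w}[l],\underline{v}[l])-d_1(\underline{w}[l+1],\underline{v}[l+1])\big)\, r^{\#v-\#w-e(v[l])}.$$ 2) If $\mathbb{1}_{w,v}=0$, then $$d_r(w,v)=\sum_{l=0}^{h-1}\big(d_1(\underline{w}[l],\underline{v}[l])-d_1(\underline{w}[l+1],\underline{v}[l+1])\big)\, r^{\#v-\#w-e(v[l])}+d_1(\underline{w_v},\underline{v_w})\, r^{\#v-\#w-e(v_w)}.$$
   Context: Fix $r\in\mathbb{N}$. Words and statistics. Consider finite words over $\{1_1,\dots,1_r,2\}$. A letter $1_i$ is a one with digit value $1$; $2$ is a two with digit value $2$. $|x|$ is the sum of digit values, $\#x$ the number of letters, $e(x)$ the number of ones. The graph $\mathbb{YF}^r$. It is the graded graph on all finite words, graded by $|\cdot|$. From $x$ there is a downward edge to every word obtained by one of two operations: (i) delete the leftmost one; (ii) replace a $2$ lying left of the leftmost one (any $2$ if there are no ones) by $1_i$, with arbitrary $i$. $\mathbb{YF}=\mathbb{YF}^1$ (with $1:=1_1$). $s$ replaces every $1_i$ by $1$. Path counts. $d_r(x,y)$ is the number of downward paths $y=y_n\to\dots\to y_m=x$ with $|y_i|=i$ ($0$ if none); $d_1$ is the count in $\mathbb{YF}$. Suffix notation. $h(w,v)$ is the length (in letters) of the longest common suffix of $w,v$,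 where $1_i\ne1_j$ for $i\neq j$. $w_v$, $v_w$ are $w$, $v$ with that suffix deleted. $\mathbb{1}_{w,v}=1$ if $w_v$ and $v_w$ both end with ones of different indices, else $0$. $x[l]$ is $x$ with its last $l$ letters deleted. *)

(* Defs.v *)
From HB Require Import structures.
From mathcomp Require Import all_boot all_order all_algebra.
Set Implicit Arguments. Unset Strict Implicit. Unset Printing Implicit Defensive.

(* Letters of YF^r: [Some i] is the one 1_(i+1) (i : 'I_r), [None] is the two 2. *)
Definition word (r : nat) := seq (option 'I_r).

Section YF.
Variable r : nat.
Implicit Types x y w v : word r.

(* digit value, |x|, #x = size x, e(x) *)
Definition dval (a : option 'I_r) : nat := if a is Some _ then 1 else 2.
Definition weight x : nat := sumn (map dval x).
Definition nones x : nat := count (fun a : option 'I_r => a != None) x.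

Definition lpos x : nat := find (fun a : option 'I_r => a != None) x.

Definition del_one x : seq (word r) :=
  if lpos x < size x then [:: take (lpos x) x ++ drop (lpos x).+1 x] else [::].

Definition repl_two x : seq (word r) :=
  [seq set_nth None x j (Some i) | j <- iota 0 (lpos x), i <- enum 'I_r].

Definition down x : seq (word r) := del_one x ++ repl_two x.

(* number of downward paths from y to x (each edge lowers the grade by 1;
   fuel = |y| suffices) *)
Fixpoint dcount (fuel : nat) x y : nat :=
  if y == x then 1 else
  if fuel is f.+1 then sumn [seq dcount f x z | z <- down y] else 0.

Definition d x y : nat := dcount (weight y) x y.

Fixpoint lcp (s t : word r) : nat :=
  match s, t with
  | a :: s', b :: t' => if a == b then (lcp s' t').+1 else 0
  | _, _ => 0
  end.
Definition h w v : nat := lcp (rev w) (rev v).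

(* x[l]: delete the last l letters *)
Definition cut x (l : nat) : word r := take (size x - l) x.

Definition wsub w v : word r := cut w (h w v).

Definition ind w v : bool :=
  match rev (wsub w v), rev (wsub v w) with
  | Some i :: _, Some j :: _ => i != j
  | _, _ => false
  end.

End YF.

Definition sproj (r : nat) (x : word r) : word 1 :=
  map (omap (fun _ => ord0)) x.

(* Main.v *)
Require Import Defs.
From mathcomp Require Import all_boot all_order all_algebra.
From mathcomp Require Import zify ring.
Import GRing.Theory Num.Theory.
Set Implicit Arguments. Unset Strict Implicit. Unset Printing Implicit Defensive.

Section Basic.
Variable r : nat.
Implicit Types x y z w v : word r.

Lemma dval_gt0 (a : option 'I_r) : 0 < dval a.
Proof. by case: a. Qed.

Lemma weight_cons a x : weight (a :: x) = dval a + weight x.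
Proof. by []. Qed.

Lemma weight_cat x y : weight (x ++ y) = weight x + weight y.
Proof. by rewrite /weight map_cat sumn_cat. Qed.

Lemma weight_rcons x a : weight (rcons x a) = weight x + dval a.
Proof. by rewrite -cats1 weight_cat /weight /= addn0. Qed.

Lemma weight0 x : weight x = 0 -> x = [::].
Proof. case: x => // a x; rewrite weight_cons; have := dval_gt0 a; lia. Qed.

Lemma size_le_weight x : size x <= weight x.
Proof. elim: x => //= a x IH; rewrite weight_cons; have := dval_gt0 a; lia. Qed.

Lemma weight_set_nth x j i : j < size x -> nth None x j = None ->
  (weight (set_nth None x j (Some i))).+1 = weight x.
Proof.
elim: x j => [|a x IH] [|j] //=.
  by move=> _ ->; rewrite !weight_cons.
by move=> Hj Hn; rewrite !weight_cons -(IH j Hj Hn) addnS.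
Qed.

Lemma lpos_size x : lpos x <= size x.
Proof. exact: find_size. Qed.

Lemma down_weight x z : z \in down x -> (weight z).+1 = weight x.
Proof.
rewrite /down mem_cat => /orP [].
  rewrite /del_one; case: ifP => // Hp; rewrite inE => /eqP ->.
  have Hx : x = take (lpos x) x ++ nth None x (lpos x) :: drop (lpos x).+1 x
    by rewrite -drop_nth // cat_take_drop.
  rewrite [in RHS]Hx !weight_cat weight_cons.
  have : nth None x (lpos x) != None.
    by apply: (@nth_find _ None (fun a => a != None)); rewrite has_find.
  by case: (nth None x (lpos x)) => //= _ _; lia.
rewrite /repl_two => /allpairsP [[j i] [/= Hj _ ->]].
rewrite mem_iota add0n in Hj; move/andP: Hj => [_ Hj].
apply: weight_set_nth; first by apply: leq_trans Hj (lpos_size x).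
by apply/eqP; apply/negbFE; exact: (before_find None Hj).
Qed.

Lemma sumn_map0 (s : seq (word r)) (F : word r -> nat) :
  (forall z, z \in s -> F z = 0) -> sumn (map F s) = 0.
Proof.
elim: s => //= a s IH H; rewrite H ?inE ?eqxx // IH // => z Hz.
by apply: H; rewrite inE Hz orbT.
Qed.

Lemma dcount_weight f x y : weight y < weight x -> dcount f x y = 0.
Proof.
elim: f y => [|f IH] y Hy /=; have -> : (y == x) = false.
- by apply/negbTE; apply/eqP => E; move: Hy; rewrite E ltnn.
- by [].
- by apply/negbTE; apply/eqP => E; move: Hy; rewrite E ltnn.
apply: sumn_map0 => z Hz; apply: IH; have := down_weight Hz; lia.
Qed.

Lemma d_weight x y : weight y < weight x -> d x y = 0.
Proof. exact: dcount_weight. Qed.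

Lemma down_nil : down [::] = [::] :> seq (word r).
Proof. by []. Qed.

Lemma dcount_fuel f g x y : weight y <= f -> weight y <= g -> dcount f x y = dcount g x y.
Proof.
elim: f g y => [|f IH] [|g] y Hf Hg //=.
- have E : weight y = 0 by lia.
  by rewrite (weight0 E); case: ifP.
- have E : weight y = 0 by lia.
  by rewrite (weight0 E); case: ifP.
- case: ifP => // _; congr sumn; apply/eq_in_map => z Hz.
  have := down_weight Hz; move=> E; apply: IH; lia.
Qed.

Lemma d_rec x y : d x y = (y == x) + \sum_(z <- down y) d x z.
Proof.
rewrite {1}/d; case E: (weight y) => [|k].
  by rewrite (weight0 E) /= big_nil addn0.
rewrite /= sumnE big_map; case: ifP => Hyx.
  rewrite big_seq big1 // => z Hz; rewrite /d; apply: dcount_weight.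
  by have := down_weight Hz; rewrite (eqP Hyx); lia.
rewrite add0n big_seq [RHS]big_seq; apply: eq_bigr => z Hz.
by apply: dcount_fuel => //; have := down_weight Hz; lia.
Qed.

End Basic.
Section Down.
Variable r : nat.
Implicit Types x y z w v : word r.

Definition hasone x := has (fun a : option 'I_r => a != None) x.

Lemma sum_down y (F : word r -> nat) : \sum_(z <- down y) F z =
  (if lpos y < size y then F (take (lpos y) y ++ drop (lpos y).+1 y) else 0)
  + \sum_(j <- iota 0 (lpos y)) \sum_(i <- enum 'I_r) F (set_nth None y j (Some i)).
Proof.
rewrite /down big_cat /del_one /repl_two big_allpairs_dep.
case: (lpos y < size y); rewrite ?big_cons ?big_nil /=; last reflexivity.
by rewrite [X in X + _]addn0.
Qed.

Lemma set_nth_rcons (T : Type) (x0 : T) s a j b : j < size s ->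
  set_nth x0 (rcons s a) j b = rcons (set_nth x0 s j b) a.
Proof. by elim: s j => [|c s IH] [|j] //= Hj; rewrite IH. Qed.

Lemma set_nth_rcons_last (T : Type) (x0 : T) s a b :
  set_nth x0 (rcons s a) (size s) b = rcons s b.
Proof. by elim: s => [|c s IH] //=; rewrite IH. Qed.

Lemma lpos_rcons y a : lpos (rcons y a) =
  if hasone y then lpos y else size y + (a == None).
Proof.
rewrite /lpos -cats1 find_cat /hasone.
by case: (has _ y) => //=; case: a.
Qed.

Lemma sum_down_rcons y a (F : word r -> nat) :
  \sum_(z <- down (rcons y a)) F z = \sum_(z <- down y) F (rcons z a) +
  (if hasone y then 0 else if a is Some _ then F y
   else \sum_(i <- enum 'I_r) F (rcons y (Some i))).
Proof.
rewrite !sum_down lpos_rcons size_rcons.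
case H: (hasone y).
  have Hp : lpos y < size y by rewrite /lpos -has_find.
  rewrite ltnW ?Hp ?addn0 //; congr (F _ + _).
    rewrite -cats1 takel_cat ?(ltnW Hp) // cats1 drop_rcons //.
    by rewrite -rcons_cat.
  rewrite big_seq [RHS]big_seq; apply: eq_bigr => j; rewrite mem_iota => /andP [_ Hj].
  by apply: eq_bigr => i _; rewrite set_nth_rcons //; lia.
have Hp : lpos y = size y by apply: hasNfind; move: H; rewrite /hasone => ->.
rewrite Hp ltnn add0n.
have E : \sum_(j <- iota 0 (size y)) \sum_(i <- enum 'I_r) F (set_nth None (rcons y a) j (Some i))
  = \sum_(j <- iota 0 (size y)) \sum_(i <- enum 'I_r) F (rcons (set_nth None y j (Some i)) a).
  rewrite big_seq [RHS]big_seq; apply: eq_bigr => j; rewrite mem_iota => /andP [_ Hj].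
  by apply: eq_bigr => i _; rewrite set_nth_rcons.
case: a E => [k|] E /=.
  rewrite addn0 ltnSn E addnC; congr (_ + F _).
  by rewrite -cats1 take_size_cat // drop_oversize ?cats0 // size_cat /=; lia.
rewrite addn1 ltnn add0n -addn1 iotaD big_cat /= big_cons big_nil addn0 E.
congr (_ + _); apply: eq_bigr => i _; by rewrite set_nth_rcons_last.
Qed.

End Down.
Section Dec.
Variable r : nat.
Implicit Types x y z w v X : word r.

Definition twos m : word r := nseq m None.
Definition Tf X m (a : option 'I_r) : nat :=
  if a is Some _ then d X (twos m)
  else \sum_(i <- enum 'I_r) d X (rcons (twos m) (Some i)).
Definition Nc M X y a := \sum_(0 <= m < M) d (twos m) y * Tf X m a.
Definition pre X y (a : option 'I_r) :=
  ((0 < size X) && (last None X == a)) * d (take (size X).-1 X) y.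

Lemma nohas_twos y : ~~ hasone y -> y = twos (size y).
Proof.
rewrite /hasone /twos; elim: y => //= a y IH; case: a => //= H.
by rewrite -IH.
Qed.

Lemma hasone_twos m : hasone (twos m) = false.
Proof. by elim: m. Qed.

Lemma size_twos m : size (twos m) = m.
Proof. exact: size_nseq. Qed.

Lemma twos_eq n m : (twos n == twos m) = (n == m).
Proof. by apply/eqP/eqP => [E|->] //; rewrite -(size_twos n) E size_twos. Qed.

Lemma sum_nat_pick M k (F : nat -> nat) : k < M ->
  \sum_(0 <= m < M) (k == m) * F m = F k.
Proof.
move=> H; rewrite big_mkord (bigD1 (Ordinal H)) //= eqxx mul1n big1 ?addn0 //.
move=> i Hi; rewrite (_ : (k == i) = false) //.
move: Hi; apply: contraNF => /eqP E; apply/eqP; apply: val_inj; by rewrite /= E.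
Qed.

Lemma Dec_step M X y a :
  (forall z, z \in down y -> d X (rcons z a) = pre X z a + Nc M X z a) ->
  weight y < M -> d X (rcons y a) = pre X y a + Nc M X y a.
Proof.
move=> IH HM.
rewrite d_rec sum_down_rcons big_seq.
under eq_bigr => z Hz do rewrite IH //.
rewrite -big_seq big_split /=.
have Epre : (rcons y a == X) + \sum_(z <- down y) pre X z a = pre X y a.
  rewrite /pre [d (take _ _) y]d_rec mulnDr big_distrr /=; congr (_ + _).
  clear IH; case/lastP: X => [|x b] //=; first by clear HM; case: y.
  rewrite size_rcons last_rcons /= (_ : take _ (rcons x b) = x);
    last by rewrite -cats1 take_size_cat.
  rewrite eqseq_rcons.
  by rewrite eq_sym [b == a]eq_sym; case: (x == y); case: (a == b).
have ENc : \sum_(z <- down y) Nc M X z a +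
   (if hasone y then 0 else if a is Some _ then d X y
    else \sum_(i <- enum 'I_r) d X (rcons y (Some i))) = Nc M X y a.
  rewrite /Nc.
  under [RHS]eq_bigr => m _ do rewrite d_rec mulnDl.
  rewrite big_split /= addnC; congr (_ + _).
    case H: (hasone y).
      rewrite big1 // => m _; case E: (y == twos m) => //.
      by move: H; rewrite (eqP E) hasone_twos.
    have Hy := nohas_twos (negbT H).
    rewrite Hy.
    under [RHS]eq_bigr => m _ do rewrite twos_eq.
    rewrite [RHS]sum_nat_pick; last by have := size_le_weight y; lia.
    by clear IH Epre; case: a.
  rewrite exchange_big /=; apply: eq_bigr => z _.
  by rewrite big_distrl.
rewrite -Epre -ENc !addnA; reflexivity.
Qed.

Lemma Dec M X y a : weight y < M -> d X (rcons y a) = pre X y a + Nc M X y a.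
Proof.
move: {2}(weight y) (leqnn (weight y)) => n.
elim: n y => [|n IHn] y Hn HM; apply: Dec_step => // z Hz.
  by have := down_weight Hz; lia.
apply: IHn; have := down_weight Hz; lia.
Qed.

End Dec.
Section Suffix.
Variable r : nat.
Implicit Types x y z w v X : word r.

Lemma cut0 x : cut x 0 = x.
Proof. by rewrite /cut subn0 take_size. Qed.

Lemma cut_rcons x b l : cut (rcons x b) l.+1 = cut x l.
Proof.
by rewrite /cut size_rcons subSS -cats1 takel_cat // leq_subr.
Qed.

Lemma h_rcons x y b a :
  h (rcons x b) (rcons y a) = if b == a then (h x y).+1 else 0.
Proof. by rewrite /h !rev_rcons. Qed.

Lemma h_nil_l v : h [::] v = 0.
Proof. by []. Qed.

Lemma h_nil_r w : h w [::] = 0.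
Proof. by rewrite /h /=; case: (rev w). Qed.

Lemma lcp_sym (s t : word r) : lcp s t = lcp t s.
Proof.
elim: s t => [|a s IH] [|b t] //=.
by rewrite eq_sym IH.
Qed.

Lemma h_sym w v : h w v = h v w.
Proof. exact: lcp_sym. Qed.

Lemma wsub_rcons x y a : wsub (rcons x a) (rcons y a) = wsub x y.
Proof. by rewrite /wsub h_rcons eqxx cut_rcons. Qed.

Lemma ind_rcons x y a : ind (rcons x a) (rcons y a) = ind x y.
Proof. by rewrite /ind !wsub_rcons. Qed.

Lemma lcp_take (s t : word r) :
  take (lcp s t) s = take (lcp s t) t /\ lcp s t <= size s /\ lcp s t <= size t.
Proof.
elim: s t => [|a s IH] [|b t] //=.
case: eqP => [->|] //=.
by case: (IH t) => -> [H1 H2]; split.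
Qed.

Lemma suffix_eq w v l : l <= h w v ->
  drop (size v - l) v = drop (size w - l) w /\ l <= size v /\ l <= size w.
Proof.
rewrite /h => Hl.
case: (lcp_take (rev w) (rev v)) => E [H1 H2].
rewrite !size_rev in H1 H2.
split; last by split; lia.
apply: (can_inj (@revK _)); rewrite -!take_rev.
by rewrite -(take_takel _ Hl) -E take_takel.
Qed.

Lemma nones_cat x y : nones (x ++ y) = nones x + nones y.
Proof. exact: count_cat. Qed.

Lemma nones_split v l : nones v = nones (cut v l) + nones (drop (size v - l) v).
Proof. by rewrite -nones_cat cat_take_drop. Qed.

Lemma nones_twos m : nones (twos r m) = 0.
Proof. by rewrite /nones count_nseq. Qed.

Lemma cut_twos m l : cut (twos r m) l = twos r (m - l).
Proof. by rewrite /cut size_twos /twos take_nseq // leq_subr. Qed.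

Lemma drop_twos m k : drop k (twos r m) = twos r (m - k).
Proof. by rewrite /twos drop_nseq. Qed.

Lemma nones_cut_twos_l m y l : l <= h (twos r m) y -> nones (cut y l) = nones y.
Proof.
move=> Hl; case: (suffix_eq Hl) => E _.
by rewrite [RHS](nones_split y l) E drop_twos nones_twos addn0.
Qed.

Lemma wsub_twos m v : wsub (twos r m) v = twos r (m - h (twos r m) v).
Proof. by rewrite /wsub cut_twos. Qed.

Lemma ind_twos_l m v : ind (twos r m) v = false.
Proof.
rewrite /ind wsub_twos /twos rev_nseq.
by case: (m - _) => //=; case: (rev (wsub v _)).
Qed.

Lemma ind_twos_r m w : ind w (twos r m) = false.
Proof.
rewrite /ind wsub_twos /twos rev_nseq.
case: (rev (wsub w _)) => [|[b|] s] //=.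
by case: (m - _).
Qed.

Lemma sproj_rcons x b : sproj (rcons x b) = rcons (sproj x) (omap (fun _ => ord0) b).
Proof. exact: map_rcons. Qed.

Lemma sproj_twos m : sproj (twos r m) = twos 1 m.
Proof. by rewrite /sproj /twos map_nseq. Qed.

Lemma weight_sproj x : weight (sproj x) = weight x.
Proof. by elim: x => //= [[a|]] x IH; rewrite !weight_cons IH. Qed.

Lemma size_sproj x : size (sproj x) = size x.
Proof. exact: size_map. Qed.

Lemma nones_sproj x : nones (sproj x) = nones x.
Proof. by elim: x => //= [[a|]] x IH; rewrite /nones /= -!/(nones _) IH. Qed.

Lemma weight_twos m : weight (twos r m) = m * 2.
Proof. by elim: m => //= m IH; rewrite weight_cons IH /=; lia. Qed.

End Suffix.
Lemma sum_enum_const n c : \sum_(i <- enum 'I_n) c = n * c.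
Proof. by rewrite big_const_seq count_predT size_enum_ord iter_addn_0 mulnC. Qed.

Lemma sum_enum_pick n (b : option 'I_n) c :
  \sum_(i <- enum 'I_n) (b == Some i) * c = (b != None) * c.
Proof.
case: b => [i0|] /=; last by rewrite big1.
rewrite (bigD1_seq i0) ?mem_enum ?enum_uniq //= eqxx mul1n big1 ?addn0 //.
move=> i Hi; have -> : (Some i0 == Some i) = false.
  by apply/eqP => [[E]]; move: Hi; rewrite E eqxx.
by rewrite mul0n.
Qed.

Lemma sum_enum1 (F : 'I_1 -> nat) : \sum_(i <- enum 'I_1) F i = F ord0.
Proof. by rewrite enum_ordSl enum_ord0 /= big_cons big_nil addn0. Qed.

Lemma Nc_weight r M (X y : word r) a : weight (rcons y a) <= weight X -> Nc M X y a = 0.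
Proof.
rewrite weight_rcons => HW; rewrite /Nc big1 // => m _.
case: (leqP (m * 2) (weight y)) => Hm; last first.
  by rewrite d_weight ?mul0n // weight_twos.
rewrite /Tf; case: a HW => [j|] /= HW.
  by rewrite (d_weight (x := X)) ?muln0 // weight_twos; lia.
rewrite big1 ?muln0 // => i _; rewrite d_weight // weight_rcons weight_twos /=; lia.
Qed.

Lemma r0_twos (w : word 0) : w = twos 0 (size w).
Proof. by elim: w => [|[[]|] w IH] //=; rewrite {1}IH. Qed.

Lemma weight_r0 (w : word 0) : weight w = (size w) * 2.
Proof. by rewrite [in LHS](r0_twos w) weight_twos. Qed.

Lemma nones_r0 (w : word 0) : nones w = 0.
Proof. by rewrite (r0_twos w) nones_twos. Qed.
Local Open Scope ring_scope.

Definition P (r : nat) (w v : word r) : Prop :=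
  let hh := h w v in
  let D1 (l : nat) : rat :=
    (d (sproj (cut w l)) (sproj (cut v l)))%:R in
  let ex (u : word r) : int :=
    (size v)%:Z - (size w)%:Z - (nones u)%:Z in
  (ind w v ->
     (d w v)%:R = \sum_(0 <= l < hh.+1)
                    (D1 l - D1 l.+1) * (r%:R : rat) ^ (ex (cut v l)))
  /\
  (~~ ind w v ->
     (d w v)%:R = \sum_(0 <= l < hh)
                    (D1 l - D1 l.+1) * (r%:R : rat) ^ (ex (cut v l))
                  + (d (sproj (wsub w v)) (sproj (wsub v w)))%:R
                    * (r%:R : rat) ^ (ex (wsub v w))).

Lemma tele (f : nat -> rat) n : \sum_(0 <= l < n) (f l - f l.+1) + f n = f 0.
Proof.
elim: n => [|n IH]; first by rewrite big_geq // add0r.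
by rewrite big_nat_recr //= -IH -addrA addrNK.
Qed.

Section Rat.
Variable r : nat.
Implicit Types x y z w v X : word r.
Local Notation q := (r%:R : rat).

Lemma P_tele w v : P w v -> ~~ ind w v ->
  (forall l, (l <= h w v)%N -> nones (cut v l) = nones v) ->
  (d w v)%:R = (d (sproj w) (sproj v))%:R * q ^ ((size v)%:Z - (size w)%:Z - (nones v)%:Z).
Proof.
move=> [_ H2] Hi Hn; rewrite (H2 Hi).
rewrite /wsub (h_sym v w) (Hn (h w v) (leqnn _)).
under eq_big_nat => l /andP [_ Hl] do rewrite Hn ?(ltnW Hl) //.
rewrite -big_distrl /= -mulrDl; congr (_ * _).
by rewrite (tele (fun l => (d (sproj (cut w l)) (sproj (cut v l)))%:R)) !cut0.
Qed.

Lemma A1 m y : P (twos r m) y ->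
  (d (twos r m) y)%:R = (d (twos 1 m) (sproj y))%:R
     * q ^ ((size y)%:Z - m%:Z - (nones y)%:Z).
Proof.
move=> HP; rewrite (P_tele HP) ?ind_twos_l ?sproj_twos ?size_twos //.
by move=> l Hl; apply: nones_cut_twos_l Hl.
Qed.

Lemma A2 m X : P X (twos r m) ->
  (d X (twos r m))%:R = (d (sproj X) (twos 1 m))%:R * q ^ (m%:Z - (size X)%:Z).
Proof.
move=> HP; rewrite (P_tele HP) ?ind_twos_r ?sproj_twos ?size_twos ?nones_twos ?subr0 //.
by move=> l _; rewrite cut_twos !nones_twos.
Qed.

End Rat.
Definition NcS (r M : nat) (X y : word r) :=
  (\sum_(0 <= k < M) d (twos r k) y * d X (twos r k))%N.

Lemma Nc_Some (r M : nat) (X y : word r) i : Nc M X y (Some i) = NcS M X y.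
Proof. by []. Qed.

Lemma sum_pre (r : nat) (X y : word r) :
  (\sum_(i <- enum 'I_r) pre X y (Some i) =
   ((0 < size X) && (last None X != None)) * d (take (size X).-1 X) y)%N.
Proof.
rewrite /pre; case: (0 < size X)%N => /=; first by rewrite sum_enum_pick.
by rewrite big1.
Qed.

Section Kpos.
Variable r : nat.
Implicit Types x y z w v X : word r.
Local Notation q := (r%:R : rat).

Lemma NcS_rel (rpos : (0 < r)%N) y a m w :
  (forall w' v', (weight v' < weight (rcons y a))%N -> P w' v') ->
  (m * 2 <= weight y)%N ->
  ((NcS (m * 2).+1 w (twos r m))%:R : rat) =
    q ^ (m%:Z - (size w)%:Z) * (NcS (m * 2).+1 (sproj w) (twos 1 m))%:R.
Proof.
move=> IH Hm.
have q0 : q != 0 by rewrite pnatr_eq0 -lt0n.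
have Wy : (weight y < weight (rcons y a))%N by rewrite weight_rcons; have := dval_gt0 a; lia.
have Htw : forall k, (k <= m)%N -> (weight (twos r k) < weight (rcons y a))%N.
  by move=> k Hk; rewrite weight_twos; lia.
rewrite /NcS !natr_sum mulr_sumr; apply: eq_bigr => k _; rewrite !natrM.
case: (leqP k m) => Hk; last first.
  rewrite d_weight ?weight_twos; last by lia.
  rewrite (d_weight (x := twos 1 k)) ?weight_twos; last by lia.
  by rewrite !mul0r mulr0.
rewrite (A1 (IH _ _ (Htw m (leqnn m)))) (A2 (IH _ _ (Htw k Hk))).
rewrite sproj_twos size_twos nones_twos.
rewrite (_ : m%:Z - (size w)%:Z = (m%:Z - k%:Z - 0%:Z) + (k%:Z - (size w)%:Z)); last by lia.
by rewrite [in RHS]expfzDr // mulrACA mulrC.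
Qed.

End Kpos.
Section Kpos2.
Variable r : nat.
Implicit Types x y z w v X : word r.
Local Notation q := (r%:R : rat).

Lemma last_sproj x : last None (sproj x) = omap (fun _ => ord0) (last None x).
Proof. by rewrite /sproj (last_map (omap (fun _ : 'I_r => ord0)) x None). Qed.

Lemma omap_eq0 (b : option 'I_r) :
  (omap (fun _ => ord0) b == Some (ord0 : 'I_1)) = (b != None).
Proof. by case: b. Qed.

Lemma Tf_rel (rpos : (0 < r)%N) y a m w :
  (forall w' v', (weight v' < weight (rcons y a))%N -> P w' v') ->
  (m * 2 <= weight y)%N ->
  ((Tf w m None)%:R : rat) =
    q ^ ((m + 1)%:Z - (size w)%:Z) * (Tf (sproj w) m None)%:R.
Proof.
move=> IH Hm.
have q0 : q != 0 by rewrite pnatr_eq0 -lt0n.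
have Wy : (weight y < weight (rcons y a))%N by rewrite weight_rcons; have := dval_gt0 a; lia.
have Htw : (weight (twos r m) < weight (rcons y a))%N by rewrite weight_twos; lia.
have WT : (weight (twos r m) < (m * 2).+1)%N by rewrite weight_twos.
have WT1 : (weight (twos 1 m) < (m * 2).+1)%N by rewrite weight_twos.
rewrite /Tf sum_enum1 (Dec (sproj w) (Some ord0) WT1) Nc_Some.
under eq_bigr => i _ do rewrite (Dec w (Some i) WT) Nc_Some.
rewrite big_split /= sum_pre sum_enum_const.
rewrite /pre size_sproj last_sproj omap_eq0 /sproj -map_take -/(sproj _).
rewrite !natrD !natrM (@NcS_rel r rpos y a m w IH Hm).
rewrite (A2 (IH _ _ Htw)).
have E2 : q * q ^ (m%:Z - (size w)%:Z) = q ^ ((m + 1)%:Z - (size w)%:Z).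
  rewrite -[X in X * _]expr1z -expfzDr //; congr (_ ^ _); lia.
case Hc: ((0 < size w)%N && (last None w != None)); last first.
  by rewrite !mul0r !add0r mulrA E2.
rewrite !mul1r mulrDr mulrA E2; congr (_ + _).
rewrite mulrC; congr (_ * _); congr (_ ^ _).
move/andP: Hc => [Hs _]; rewrite size_takel ?leq_pred //; lia.
Qed.

Lemma Kpos (rpos : (0 < r)%N) y a w :
  (forall w' v', (weight v' < weight (rcons y a))%N -> P w' v') ->
  ((Nc (weight y).+1 w y a)%:R : rat) =
   q ^ ((size (rcons y a))%:Z - (size w)%:Z - (nones (rcons y a))%:Z)
   * (Nc (weight y).+1 (sproj w) (sproj y) (omap (fun _ => ord0) a))%:R.
Proof.
move=> IH.
have q0 : q != 0 by rewrite pnatr_eq0 -lt0n.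
have Wy : (weight y < weight (rcons y a))%N by rewrite weight_rcons; have := dval_gt0 a; lia.
have Htw : forall m, (m * 2 <= weight y)%N -> (weight (twos r m) < weight (rcons y a))%N.
  by move=> m Hm; rewrite weight_twos; lia.
have nonesv : nones (rcons y a) = (nones y + (a != None))%N.
  by rewrite /nones -cats1 count_cat /= addn0.
rewrite size_rcons.
rewrite /Nc !natr_sum mulr_sumr; apply: eq_bigr => m _.
rewrite !natrM.
case: (leqP (m * 2) (weight y)) => Hm; last first.
  rewrite d_weight ?weight_twos //.
  rewrite (d_weight (x := twos 1 m)) ?weight_twos ?weight_sproj //.
  by rewrite !mul0r mulr0.
rewrite (A1 (IH _ _ Wy)).
case: a IH Wy Htw nonesv => [j|] IH Wy Htw nonesv.
  rewrite nonesv /Tf /= (A2 (IH _ _ (Htw m Hm))).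
  rewrite [in RHS](_ : _ - _ - _ = ((size y)%:Z - m%:Z - (nones y)%:Z) + (m%:Z - (size w)%:Z)); last by lia.
  by rewrite [in RHS]expfzDr // [LHS]mulrACA [LHS]mulrC.
rewrite nonesv (@Tf_rel rpos y None m w IH Hm) /= addn0.
rewrite [in RHS](_ : _ - _ - _ = ((size y)%:Z - m%:Z - (nones y)%:Z) + ((m + 1)%:Z - (size w)%:Z)); last by lia.
by rewrite [in RHS]expfzDr //; ring.
Qed.

End Kpos2.
Lemma K0 (y : word 0) a w :
  ((Nc (weight y).+1 w y a)%:R : rat) =
   ((0%N)%:R : rat) ^ ((size (rcons y a))%:Z - (size w)%:Z - (nones (rcons y a))%:Z)
   * (Nc (weight y).+1 (sproj w) (sproj y) (omap (fun _ => ord0) a))%:R.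
Proof.
case: a => [[j Hj]|] //=.
rewrite (_ : Nc _ w y None = 0%N); last first.
  by rewrite /Nc big1 // => m _; rewrite /Tf enum_ord0 big_nil muln0.
case E: (Nc (weight y).+1 (sproj w) (sproj y) None) => [|k]; first by rewrite mulr0.
have : ~~ (weight (rcons (sproj y) None) <= weight (sproj w))%N.
  by apply/negP => /(Nc_weight (weight y).+1); rewrite E.
rewrite weight_rcons !weight_sproj !weight_r0 /= -ltnNge => Hlt.
rewrite size_rcons nones_r0 (_ : _ - _ - _ = ((size y - size w).+1)%:Z); last by lia.
by rewrite -exprnP expr0n /= mul0r.
Qed.

Lemma K (r : nat) (y : word r) a w :
  (forall w' v' : word r, (weight v' < weight (rcons y a))%N -> P w' v') ->
  ((Nc (weight y).+1 w y a)%:R : rat) =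
   (r%:R : rat) ^ ((size (rcons y a))%:Z - (size w)%:Z - (nones (rcons y a))%:Z)
   * (Nc (weight y).+1 (sproj w) (sproj y) (omap (fun _ => ord0) a))%:R.
Proof.
case: r y a w => [|r'] y a w IH; first exact: K0.
exact: Kpos.
Qed.
Lemma pre_rcons (r : nat) (x y : word r) b a : pre (rcons x b) y a = ((b == a) * d x y)%N.
Proof.
rewrite /pre size_rcons last_rcons /= (_ : take _ (rcons x b) = x) //.
by rewrite -cats1 take_size_cat.
Qed.

Lemma ind_letters (r : nat) (b a : option 'I_r) :
  (match b, a with Some i, Some j => i != j | _, _ => false end) ->
  omap (fun _ => ord0 : 'I_1) b = omap (fun _ => ord0) a.
Proof. by case: b => [i|]; case: a => [j|]. Qed.

Lemma nind_letters (r : nat) (b a : option 'I_r) : b != a ->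
  ~~ (match b, a with Some i, Some j => i != j | _, _ => false end) ->
  (omap (fun _ => ord0 : 'I_1) b == omap (fun _ => ord0) a) = false.
Proof. by case: b => [i|]; case: a => [j|] //= H; rewrite negbK => /eqP E; case/eqP: H; rewrite E. Qed.

Lemma main_step (r : nat) (v : word r) :
  (forall w' v' : word r, (weight v' < weight v)%N -> P w' v') -> forall w, P w v.
Proof.
case/lastP: v => [|y a] IH w.
  rewrite /P; cbv beta zeta; rewrite h_nil_r.
  have Hind : ind w [::] = false.
    by rewrite /ind; case: (rev (wsub w [::])) => [|[?|] ?].
  rewrite Hind; split => // _.
  rewrite big_geq // add0r /wsub h_nil_r h_nil_l cut0 /=.
  case: w {Hind} => [|c w].
    by rewrite /d /= !subr0 expr0z mulr1.
  have W0 : weight ([::] : word r) = 0%N by [].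
  have W01 : weight ([::] : word 1) = 0%N by [].
  rewrite !d_weight ?mul0r // ?weight_sproj weight_cons ?W0 ?W01; have := dval_gt0 c; lia.
have Wy : (weight y < weight (rcons y a))%N by rewrite weight_rcons; have := dval_gt0 a; lia.
have W1 : (weight (sproj y) < (weight y).+1)%N by rewrite weight_sproj.
have HK := K w IH.
have Hdec := Dec w a (ltnSn (weight y)).
case/lastP: w HK Hdec => [|x b] HK Hdec.
  rewrite /P; cbv beta zeta; rewrite h_nil_l.
  have Hind : ind [::] (rcons y a) = false by [].
  rewrite Hind; split => // _.
  rewrite big_geq // add0r /wsub h_nil_r cut0 /=.
  have Hdec1 := Dec [::] (omap (fun _ => ord0) a) W1.
  rewrite Hdec /pre /= add0n HK sproj_rcons Hdec1 /pre /= add0n mulrC //.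
rewrite sproj_rcons in HK.
have Hdec1 := Dec (rcons (sproj x) (omap (fun _ => ord0) b)) (omap (fun _ => ord0) a) W1.
rewrite /P; cbv beta zeta.
rewrite Hdec pre_rcons.
case: (eqVneq b a) => [Eba|Nba].
  subst b.
  rewrite h_rcons eqxx ind_rcons !wsub_rcons.
  have := IH x y Wy; rewrite /P; cbv beta zeta; case => H1 H2.
  have Es : (size (rcons y a))%:Z - (size (rcons x a))%:Z = (size y)%:Z - (size x)%:Z.
    by rewrite !size_rcons; lia.
  rewrite Es in HK *.
  rewrite big_nat_recl // [in X in _ /\ X]big_nat_recl //.
  have E0 : forall n, \sum_(0 <= l < n) ((d (sproj (cut (rcons x a) l.+1)) (sproj (cut (rcons y a) l.+1)))%:R
       - (d (sproj (cut (rcons x a) l.+2)) (sproj (cut (rcons y a) l.+2)))%:R) *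
       (r%:R : rat) ^ ((size y)%:Z - (size x)%:Z - (nones (cut (rcons y a) l.+1))%:Z)
     = \sum_(0 <= l < n) ((d (sproj (cut x l)) (sproj (cut y l)))%:R
       - (d (sproj (cut x l.+1)) (sproj (cut y l.+1)))%:R) *
       (r%:R : rat) ^ ((size y)%:Z - (size x)%:Z - (nones (cut y l))%:Z).
    by move=> n; apply: eq_bigr => l _; rewrite !cut_rcons.
  rewrite !E0 !cut0 !cut_rcons !cut0 !sproj_rcons Hdec1 pre_rcons eqxx !mul1n.
  split => Hi.
    rewrite natrD (H1 Hi) addrC; congr (_ + _).
    by rewrite natrD addrC addKr HK mulrC.
  rewrite natrD (H2 Hi) addrC addrA; congr (_ + _ + _).
  by rewrite natrD addrC addKr HK mulrC.
have Nab : (a == b) = false by rewrite eq_sym (negbTE Nba).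
have Hind : ind (rcons x b) (rcons y a) =
   (match b, a with Some i, Some j => i != j | _, _ => false end).
  by rewrite /ind /wsub !h_rcons (negbTE Nba) Nab !cut0 !rev_rcons.
rewrite Hind /wsub !h_rcons (negbTE Nba) Nab !cut0 mul0n add0n.
split => Hi.
  rewrite big_nat1 !cut0 !cut_rcons !cut0 !sproj_rcons Hdec1 pre_rcons (ind_letters Hi) eqxx mul1n.
  by rewrite natrD addrC addKr HK (ind_letters Hi) mulrC.
rewrite big_geq // add0r !sproj_rcons Hdec1 pre_rcons (nind_letters Nba Hi) mul0n add0n.
by rewrite HK mulrC.
Qed.

Lemma P_all (r : nat) n (v : word r) : (weight v <= n)%N -> forall w, P w v.
Proof.
elim: n v => [|n IHn] v Hv; apply: main_step => w' v' Hv'; apply: IHn || lia.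
lia.
Qed.

Theorem mainTheorem7 (r : nat) (w v : word r) :
  let hh := h w v in
  let D1 (l : nat) : rat :=
    (d (sproj (cut w l)) (sproj (cut v l)))%:R in
  let ex (u : word r) : int :=
    (size v)%:Z - (size w)%:Z - (nones u)%:Z in
  (ind w v ->
     (d w v)%:R = \sum_(0 <= l < hh.+1)
                    (D1 l - D1 l.+1) * (r%:R : rat) ^ (ex (cut v l)))
  /\
  (~~ ind w v ->
     (d w v)%:R = \sum_(0 <= l < hh)
                    (D1 l - D1 l.+1) * (r%:R : rat) ^ (ex (cut v l))
                  + (d (sproj (wsub w v)) (sproj (wsub v w)))%:R
                    * (r%:R : rat) ^ (ex (wsub v w))).
Proof.
exact: (@P_all r (weight v) v (leqnn _) w).
Qed.
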